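(* Consider random parity games on $n=|\mathcal{V}|$ nodes drawn according to the random model (R) with out-degree $d=2$. Then for every node $v$, $$\mathbb{P}(v\text{ is self-winning})\to 0\quad\text{as } n\to\infty.$$
   Context: A parity game is a tuple $(\mathcal{G},a,p)$ with $\mathcal{G}=(\mathcal{V},\mathcal{E})$ a finite directed graph, owners $a:\mathcal{V}\to\{-1,+1\}$ and priorities $p:\mathcal{V}\to\mathbb{N}$. Let $\mathrm{par}(k)=+1$ if $k$ is odd and $-1$ if $k$ is even. For $i\in\{-1,+1\}$, $\mathcal{G}_i$ is the subgraph induced by nodes owned by $i$. A self-winning cycle is a directed cycle in some $\mathcal{G}_i$ whose maximal priority $m$ satisfies $\mathrm{par}(m)=i$; a node is self-winning if it lies on such a cycle. Random model (R) with out-degree $d$: $\mathcal{G}$ is drawn uniformly at random among directed graphs on $n$ labelled nodes in which every node has out-degree exactly $d$; the owners $a(v)$ are i.i.d. uniform on $\{-1,+1\}$; the priorities $p(v)$ are i.i.d. from a distribution on $\mathbb{N}$ with $\mathbb{P}(p(v)\text{ even})=\mathbb{P}(p(v)\text{ odd})=1/2$; all independent. *)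

(* Defs.v *)
From HB Require Import structures.
From mathcomp Require Import all_boot all_order all_algebra.
From mathcomp Require Import all_classical all_reals all_analysis.
Set Implicit Arguments. Unset Strict Implicit. Unset Printing Implicit Defensive.
Import Order.TTheory GRing.Theory Num.Theory.
Local Open Scope classical_set_scope.
Local Open Scope ring_scope.

(* A directed graph with out-degree exactly d is given by its
   out-neighbourhoods E : {ffun 'I_n -> {set 'I_n}} with #|E v| = d
   (no multi-edges; self-loops allowed).  Owners: true = +1 (odd player),
   false = -1 (even player). *)
Definition graph (n : nat) := {ffun 'I_n -> {set 'I_n}}.
Definition owners (n : nat) := {ffun 'I_n -> bool}.
Definition prios (n : nat) := {ffun 'I_n -> nat}.

Definition outdeg_eq (d n : nat) (E : graph n) : bool :=
  [forall v, #|E v| == d].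

Definition ngraphs (d n : nat) : nat := #|[set E : graph n | outdeg_eq d E]|.

Definition self_winning_cycle (n : nat) (E : graph n) (a : owners n)
    (p : prios n) (s : seq 'I_n) : bool :=
  [&& s != [::], uniq s, cycle (fun x y => y \in E x) s &
      [exists b : bool,
        all (fun x => a x == b) s && (odd (\max_(x <- s) p x) == b)]].

Definition self_winning (n : nat) (E : graph n) (a : owners n) (p : prios n)
    (v : 'I_n) : Prop :=
  exists s : seq 'I_n, v \in s /\ self_winning_cycle E a p s.

Definition prio_distribution (R : realType) (q : nat -> R) : Prop :=
  (forall k, 0 <= q k) /\
  (\esum_(k in [set: nat]) (q k)%:E = 1%E) /\
  (\esum_(k in [set k : nat | ~~ odd k]) (q k)%:E = (1 / 2 : R)%:E).

(* Probability, under model (R) with out-degree d and priority law q, that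
   node v of the random game on n nodes is self-winning: the (countable) sum
   over all outcomes (E, a, p) of the event, each outcome having weight
   (1/#graphs) * 2^-n * prod_i q (p i). *)
Definition prob_self_winning (R : realType) (q : nat -> R) (d n : nat)
    (v : 'I_n) : \bar R :=
  \esum_(x in [set x : graph n * owners n * prios n |
            outdeg_eq d x.1.1 /\ self_winning x.1.1 x.1.2 x.2 v])
     ((\prod_(i : 'I_n) q (x.2 i)) /
        ((ngraphs d n)%:R * (2 ^+ n)))%:E.

(* Main.v *)
Require Import Defs.
From HB Require Import structures.
From mathcomp Require Import all_boot all_order all_algebra.
From mathcomp Require Import all_classical all_reals all_analysis.
From mathcomp Require Import finmap.
Import Order.TTheory GRing.Theory Num.Theory.
Set Implicit Arguments. Unset Strict Implicit. Unset Printing Implicit Defensive.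
Local Open Scope classical_set_scope.
Local Open Scope ring_scope.
Section Comb2.
Local Open Scope nat_scope.
Local Open Scope set_scope.
Lemma foldr_prod (T : Type) (r : seq T) (f : T -> nat) :
  foldr muln 1 (map f r) = \prod_(x <- r) f x.
Proof. by elim: r => [|x r IH]; rewrite ?big_nil ?big_cons //= IH. Qed.

Lemma card_family_prod (n : nat) (T : finType) (F : 'I_n -> pred T) :
  #|(family F : simpl_pred {ffun 'I_n -> T})| = \prod_x #|F x|.
Proof. by rewrite card_family foldr_prod big_enum. Qed.

Lemma card_pairs_with (n : nat) (y : 'I_n) :
  #|[pred S : {set 'I_n} | (#|S| == 2) && (y \in S)]| <= n.-1.
Proof.
have -> : n.-1 = #|[set~ y]| by rewrite cardsC1 card_ord.
apply: leq_trans (leq_imset_card (fun z => [set y; z]) _).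
apply: subset_leq_card. apply/fintype.subsetP => S; rewrite inE => /andP[/cards2P[x [z [xz ->]]]].
rewrite !inE => /orP[]/eqP ->.
  by apply/imsetP; exists z => //; rewrite !inE eq_sym.
by apply/imsetP; exists x; [rewrite !inE | rewrite finset.setUC].
Qed.

Lemma prod_if (n : nat) (s : seq 'I_n) (a b : nat) : uniq s ->
  \prod_(x : 'I_n) (if x \in s then a else b) = a ^ size s * b ^ (n - size s).
Proof.
move=> us; rewrite (bigID (fun x => x \in s)) /=.
rewrite (eq_bigr (fun _ => a)); last by move=> x ->.
rewrite [X in _ * X](eq_bigr (fun _ => b)); last by move=> x /negbTE ->.
rewrite !prod_nat_const; congr (_ ^ _ * _ ^ _).
  by rewrite -(card_uniqP us); apply: eq_card.
have h : size s + #|predC (mem s)| = n by rewrite -(card_uniqP us) cardC card_ord.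
have hs : size s <= n by move: (leq_addr #|predC (mem s)| (size s)); rewrite h.
have -> : #|[pred x | x \notin s]| = #|predC (mem s)| by apply: eq_card => x; rewrite !inE.
by apply/eqP; rewrite -(eqn_add2l (size s)) subnKC // h.
Qed.

Definition goodE n (s : seq 'I_n) (E : graph n) := all (fun x => next s x \in E x) s.
Definition monoA n (s : seq 'I_n) (a : owners n) := [exists b, all (fun x => a x == b) s].

Lemma C1 n (s : seq 'I_n) : uniq s ->
  #|[set E : graph n | outdeg_eq 2 E && goodE s E]|
    <= n.-1 ^ size s * 'C(n, 2) ^ (n - size s).
Proof.
move=> us.
pose F := fun x : 'I_n => [pred S : {set 'I_n} | (#|S| == 2) && ((x \in s) ==> (next s x \in S))].
apply: (@leq_trans #|(family F : simpl_pred {ffun 'I_n -> {set 'I_n}})|).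
  apply: subset_leq_card; apply/fintype.subsetP => E; rewrite inE => /andP[/forallP hd /allP hg].
  apply/familyP => x; rewrite !inE hd /=; apply/implyP => /hg //.
rewrite card_family_prod -prod_if //; apply: leq_prod => x _.
case: ifP => xs.
  apply: leq_trans (card_pairs_with (next s x)); apply: subset_leq_card.
  by apply/fintype.subsetP => S; rewrite !inE xs.
rewrite -[n in 'C(n, 2)]card_ord -card_draws; apply: subset_leq_card; apply/fintype.subsetP => S.
by rewrite !inE xs andbT.
Qed.

Lemma C3 n : ngraphs 2 n = 'C(n, 2) ^ n.
Proof.
pose F := fun x : 'I_n => [pred S : {set 'I_n} | #|S| == 2].
rewrite /ngraphs (@eq_card _ _ (family F)); last first.
  move=> E; apply/idP/idP; rewrite in_setE /= /outdeg_eq => h.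
    by apply/familyP => x; rewrite inE; move/forallP: h.
  by apply/forallP => x; move/familyP: h => /(_ x); rewrite inE.
rewrite card_family_prod (eq_bigr (fun _ => 'C(n, 2))).
  by rewrite prod_nat_const card_ord.
by move=> x _; rewrite -[n in 'C(n, 2)]card_ord -card_draws; apply: eq_card => S; rewrite !inE.
Qed.

Lemma C2 n (s : seq 'I_n) : uniq s ->
  #|[set a : owners n | monoA s a]| <= 2 * 2 ^ (n - size s).
Proof.
move=> us.
have hb : forall b : bool, #|[set a : owners n | all (fun x => a x == b) s]| <= 2 ^ (n - size s).
  move=> b; pose F := fun x : 'I_n => [pred c : bool | (x \in s) ==> (c == b)].
  apply: (@leq_trans #|(family F : simpl_pred {ffun 'I_n -> bool})|).
    apply: subset_leq_card; apply/fintype.subsetP => a; rewrite inE => /allP ha.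
    by apply/familyP => x; rewrite !inE; apply/implyP => /ha.
  rewrite card_family_prod.
  apply: (@leq_trans (\prod_(x : 'I_n) (if x \in s then 1 else 2))); last by rewrite prod_if // exp1n mul1n.
  apply: leq_prod => x _; case: ifP => xs.
    rewrite (@eq_card _ _ (pred1 b)) ?card1 // => c; by rewrite !inE xs.
  by rewrite -card_bool; apply: subset_leq_card; apply/fintype.subsetP.
apply: leq_trans (_ : #|[set a : owners n | all (fun x => a x == true) s] :|:
                        [set a : owners n | all (fun x => a x == false) s]| <= _).
  apply: subset_leq_card; apply/fintype.subsetP => a; rewrite !inE => /existsP[[] h]; by rewrite h ?orbT.
by rewrite mul2n -addnn; apply: leq_trans (leq_card_setU _ _) (leq_add (hb _) (hb _)).
Qed.

Lemma C4 n (v : 'I_n) k :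
  #|[set t : k.-tuple 'I_n | uniq (v :: t)]| = n.-1 ^_ k.
Proof.
rewrite -[n in n.-1]card_ord -(cardC1 v) -card_uniq_tuples; apply: eq_card => t.
by rewrite !inE /= all_predC has_pred1.
Qed.
End Comb2.
Section Comb3.
Local Open Scope nat_scope.
Local Open Scope set_scope.

Definition badb n (v : 'I_n) (e : graph n * owners n) : bool :=
  [exists k : 'I_n, [exists t : k.-tuple 'I_n,
     [&& uniq (v :: t), goodE (v :: t) e.1 & monoA (v :: t) e.2]]].

Lemma union_card (T I : finType) (P : I -> T -> bool) :
  #|[set x | [exists i, P i x]]| <= \sum_i #|[set x | P i x]|.
Proof.
rewrite -sum1_card (eq_bigr (fun i => \sum_(x in [set x | P i x]) 1)); last first.
  by move=> i _; rewrite sum1_card.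
rewrite big_mkcond /= (eq_bigr (fun i => \sum_x (if P i x then 1 else 0))); last first.
  by move=> i _; rewrite big_mkcond; apply: eq_bigr => x _; rewrite inE.
rewrite exchange_big /=; apply: leq_sum => x _; rewrite inE.
case: existsP => [[i Pi]|//]; rewrite (bigD1 i) //= Pi; exact: leq_addr.
Qed.

Lemma count_bad n (v : 'I_n) :
  #|[set e : graph n * owners n | outdeg_eq 2 e.1 && badb v e]| <=
  \sum_(k < n) n.-1 ^_ k * (n.-1 ^ k.+1 * 'C(n, 2) ^ (n - k.+1) * (2 * 2 ^ (n - k.+1))).
Proof.
pose Q := fun (k : 'I_n) (e : graph n * owners n) => [exists t : k.-tuple 'I_n,
     outdeg_eq 2 e.1 && [&& uniq (v :: t), goodE (v :: t) e.1 & monoA (v :: t) e.2]].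
apply: (@leq_trans #|[set e | [exists k, Q k e]]|).
  apply: subset_leq_card; apply/fintype.subsetP => e; rewrite !inE => /andP[hd /existsP[k /existsP[t ht]]].
  by apply/existsP; exists k; apply/existsP; exists t; rewrite hd.
apply: leq_trans (union_card _) _; apply: leq_sum => k _.
apply: leq_trans (union_card _) _.
rewrite -(C4 v k) -sum_nat_const [X in _ <= X]big_mkcond; apply: leq_sum => t _; rewrite inE.
case: ifP => /= hu; last first.
  rewrite leqn0 cards_eq0; apply/eqP/setP => e; by rewrite !inE /= ?hu ?andbF.
have hs : size (v :: t) = k.+1 by rewrite /= size_tuple.
rewrite -hs; apply: leq_trans (_ : #|finset.setX [set E : graph n | outdeg_eq 2 E && goodE (v :: t) E]
    [set a : owners n | monoA (v :: t) a]| <= _).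
  apply: subset_leq_card; apply/fintype.subsetP => e; rewrite !inE /= => /andP[-> /andP[-> ->]].
  by [].
by rewrite cardsX; apply: leq_mul; [apply: C1 | apply: C2].
Qed.
End Comb3.
Section Comb4.
Local Open Scope nat_scope.
Lemma C5 n (v : 'I_n) (E : graph n) (a : owners n) (p : prios n) :
  self_winning E a p v -> badb v (E, a).
Proof.
move=> [s [vs /and4P[_ us cyc /existsP[b /andP[hall _]]]]].
case: (rot_to vs) => i s' hrot.
have u' : uniq (v :: s') by rewrite -hrot rot_uniq.
have c' : cycle (fun x y => y \in E x) (v :: s') by rewrite -hrot rot_cycle.
have a' : all (fun x => a x == b) (v :: s').
  by apply/allP => x; rewrite -hrot mem_rot => /(allP hall).
have hsz : size s' < n.
  have := max_card (mem (v :: s')); rewrite (card_uniqP u') card_ord; exact.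
apply/existsP; exists (Ordinal hsz); apply/existsP; exists (in_tuple s').
apply/and3P; split => //.
  by apply/allP => x xs; exact: next_cycle c' xs.
by apply/existsP; exists b.
Qed.
End Comb4.
Section Prob.
Variable R : realType.

Lemma qpart (q : nat -> R) (hq : prio_distribution q) M : \sum_(k < M) q k <= 1.
Proof.
case: hq => q0 [hT _].
have h := @nneseries_lim_ge R (fun k => (q k)%:E) xpredT 0 M (fun k _ _ => q0 k : (0 <= (q k)%:E)%E).
rewrite nneseries_esumT in h; last by move=> k; rewrite lee_fin.
by rewrite hT sumEFin lee_fin big_mkord in h.
Qed.

Lemma sum_uniq_le (T : finType) (s : seq T) (F : T -> R) : uniq s ->
  (forall x, 0 <= F x) -> \sum_(x <- s) F x <= \sum_x F x.
Proof.
move=> us F0; rewrite big_uniq // [X in _ <= X](bigID (mem s)) /=.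
by rewrite lerDl sumr_ge0.
Qed.

Lemma L0 (q : nat -> R) (hq : prio_distribution q) n (S : seq {ffun 'I_n -> nat}) :
  uniq S -> \sum_(p <- S) \prod_i q (p i) <= 1.
Proof.
move=> uS; have q0 := hq.1.
set m := \max_(p <- S) \max_i p i.
have hM : forall p, p \in S -> forall i, (p i < m.+1)%N.
  move=> p pS i; rewrite ltnS; apply: leq_trans (leq_bigmax i) _.
  exact: (@leq_bigmax_seq _ S xpredT (fun p : {ffun 'I_n -> nat} => \max_i p i) p).
pose h (p : {ffun 'I_n -> nat}) : {ffun 'I_n -> 'I_m.+1} := [ffun i => inord (p i)].
pose g (f : {ffun 'I_n -> 'I_m.+1}) : {ffun 'I_n -> nat} := [ffun i => val (f i)].
have ghK : {in S, cancel h g}.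
  by move=> p pS; apply/ffunP => i; rewrite !ffunE /= inordK // hM.
rewrite (eq_big_seq (fun p => \prod_i q (g (h p) i))); last by move=> p pS; rewrite ghK.
rewrite -(big_map h xpredT (fun f => \prod_i q (g f i))).
apply: le_trans (sum_uniq_le _ _) _.
- by rewrite (map_inj_in_uniq (can_in_inj ghK)).
- by move=> f; apply: prodr_ge0 => i _.
rewrite (eq_bigr (fun f : {ffun 'I_n -> 'I_m.+1} => \prod_i q (f i))); last by move=> f _; apply: eq_bigr => i _; rewrite ffunE.
rewrite -(bigA_distr_bigA (fun (i : 'I_n) (j : 'I_m.+1) => q j)) /=.
apply: prodr_ile1 => i _; rewrite sumr_ge0 //=; exact: qpart.
Qed.
End Prob.
Section Prob2.
Variable R : realType.
Local Open Scope ereal_scope.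

Lemma esum_le_sub (T : choiceType) (S1 S2 : set T) (f : T -> \bar R) :
  (forall x, S1 x -> S2 x) -> (forall x, S2 x -> 0 <= f x) ->
  \esum_(x in S1) f x <= \esum_(x in S2) f x.
Proof.
move=> h12 _; apply: ge_ereal_sup => _ [X [finX XS] <-].
by apply: ereal_sup_ubound; exists X => //; split => // x /XS /h12.
Qed.

Lemma Lq (q : nat -> R) (hq : prio_distribution q) n (c : R) : (0 <= c)%R ->
  \esum_(p in [set: {ffun 'I_n -> nat}]) ((\prod_i q (p i)) * c)%:E <= c%:E.
Proof.
move=> c0; apply: ge_ereal_sup => _ [X [finX _] <-].
rewrite fsbig_finite //= sumEFin lee_fin -mulr_suml.
by apply: ler_piMl => //; apply: L0 => //; exact: fset_uniq.
Qed.

Lemma esum_const_fin (T : finType) (P : pred T) (c : R) : (0 <= c)%R ->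
  \esum_(x in [set x | P x]) c%:E <= (#|[set x | P x]%SET|%:R * c)%:E.
Proof.
move=> c0; apply: ge_ereal_sup => _ [X [finX XP] <-].
rewrite fsbig_finite //= sumEFin lee_fin big_const_seq count_predT iter_addr_0.
rewrite -[X in (X <= _)%R]mulr_natl; apply: ler_wpM2r => //; rewrite ler_nat cardE.
apply: uniq_leq_size; first exact: fset_uniq.
move=> x; rewrite in_fset_set // in_setE => /XP /= Px; by rewrite mem_enum finset.in_set.
Qed.
End Prob2.
Section Prob3.
Variable R : realType.
Local Open Scope ereal_scope.

Lemma E1 (q : nat -> R) (hq : prio_distribution q) n (v : 'I_n) :
  prob_self_winning q 2 v <=
  ((#|[set e | outdeg_eq 2 e.1 && badb v e]%SET|%:R /
     ((ngraphs 2 n)%:R * 2 ^+ n))%R)%:E.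
Proof.
set D := ((ngraphs 2 n)%:R * 2 ^+ n)%R.
have c0 : (0 <= D^-1)%R by rewrite invr_ge0 mulr_ge0 // exprn_ge0.
have q0 := hq.1.
set P := fun e : graph n * owners n => outdeg_eq 2 e.1 && badb v e.
rewrite /prob_self_winning -/D.
apply: le_trans (_ : \esum_(x in [set e | P e] `*`` (fun _ => [set: prios n]))
    (((\prod_i q (x.2 i)) / D)%R)%:E <= _).
  apply: esum_le_sub.
    move=> [[E a] p] /= [hd hsw]; split => //; rewrite /P /= hd /=; exact: C5 hsw.
  by move=> x _; rewrite lee_fin mulr_ge0 // prodr_ge0.
rewrite -(@esum_esum _ _ _ _ _ (fun (e : graph n * owners n) (p : prios n) =>
   (((\prod_i q (p i)) / D)%R)%:E)); last first.
  by move=> e p _ _; rewrite lee_fin mulr_ge0 // prodr_ge0.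
apply: le_trans (_ : \esum_(e in [set e | P e]) (D^-1)%:E <= _).
  by apply: le_esum => e _; apply: Lq.
apply: le_trans (esum_const_fin P c0) _. by rewrite lee_fin mulrC.
Qed.
End Prob3.
From mathcomp Require Import ring.
Lemma nat_ident n k : (k < n)%N ->
  (n.-1 ^ k.+1 * 'C(n, 2) ^ (n - k.+1) * (2 * 2 ^ (n - k.+1)) * n ^ k.+1 =
   2 * ('C(n, 2) ^ n * 2 ^ n))%N.
Proof.
move=> kn.
have hC : (n.-1 * n = 2 * 'C(n, 2))%N by rewrite mulnC -[in LHS](bin1 n.-1) mul_bin_diag.
have hn : n = ((n - k.+1) + k.+1)%N by rewrite subnK.
set r := (n - k.+1)%N; set C := 'C(n, 2).
rewrite [in RHS]hn !expnD.
have h2 : (n.-1 ^ k.+1 * n ^ k.+1 = 2 ^ k.+1 * C ^ k.+1)%N by rewrite -expnMn hC expnMn.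
have e : forall a b c d : nat, (a * c * d * b = (a * b) * (c * d))%N.
  by move=> a b c d; ring.
rewrite e h2; ring.
Qed.
Section Prob4.
Variable R : realType.
Lemma E2 n (v : 'I_n) : (1 < n)%N ->
  (#|[set e | outdeg_eq 2 e.1 && badb v e]%SET|%:R /
     ((ngraphs 2 n)%:R * 2 ^+ n) <=
   \sum_(k < n) ((n.-1 ^_ k)%:R * 2 / n%:R ^+ k.+1) :> R)%R.
Proof.
move=> n1.
have Cpos : (0 < 'C(n, 2))%N by rewrite bin_gt0.
have Dpos : (0 < (ngraphs 2 n)%:R * 2 ^+ n :> R)%R.
  by rewrite C3 mulr_gt0 // ?exprn_gt0 // ltr0n expn_gt0 Cpos.
have Npos : forall k, (0 < n%:R ^+ k :> R)%R.
  by move=> k; rewrite exprn_gt0 // ltr0n; apply: leq_trans n1.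
rewrite ler_pdivrMr // mulr_suml.
apply: le_trans (_ : (\sum_(k < n) n.-1 ^_ k * (n.-1 ^ k.+1 * 'C(n, 2) ^ (n - k.+1) * (2 * 2 ^ (n - k.+1))))%:R <= _)%R.
  by rewrite ler_nat; apply: count_bad.
rewrite natr_sum; apply: ler_sum => k _; rewrite le_eqVlt; apply/orP; left; apply/eqP.
have := nat_ident (ltn_ord k).
set B := (n.-1 ^ k.+1 * 'C(n, 2) ^ (n - k.+1) * (2 * 2 ^ (n - k.+1)))%N => hB.
have hBR : (B%:R * n%:R ^+ k.+1 = 2 * ((ngraphs 2 n)%:R * 2 ^+ n) :> R)%R.
  by rewrite C3 -natrX -natrM hB natrM natrM natrX natrX.
have hN : (n%:R ^+ k.+1 != 0 :> R)%R by rewrite gt_eqF.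
have hD : ((ngraphs 2 n)%:R * 2 ^+ n = B%:R * n%:R ^+ k.+1 / 2 :> R)%R.
  by rewrite hBR; field.
rewrite natrM hD; field; exact: hN.
Qed.
End Prob4.
From mathcomp Require Import zify ring.
Lemma ffact_bound m K k : (K <= m)%N ->
  (m.-1 ^_ k <= m ^ minn k K * (m - K) ^ (k - K))%N.
Proof.
move=> Km; elim: k => [|k IH]; first by rewrite ffactn0 min0n sub0n.
rewrite ffactnSr; case: (ltnP k K) => kK.
  have -> : minn k.+1 K = k.+1 by apply/minn_idPl.
  have -> : (k.+1 - K = 0)%N by apply/eqP; rewrite subn_eq0.
  have e1 : minn k K = k by apply/minn_idPl/ltnW.
  have e2 : (k - K = 0)%N by apply/eqP; rewrite subn_eq0 ltnW.
  rewrite e1 e2 in IH; rewrite expnSr expn0 muln1; rewrite expn0 muln1 in IH.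
  by apply: leq_mul => //; lia.
have -> : minn k.+1 K = K by apply/minn_idPr/ltnW.
have e1 : minn k K = K by apply/minn_idPr.
rewrite e1 in IH; rewrite subSn // expnSr mulnA; apply: leq_mul => //; lia.
Qed.

Section Anal.
Variable R : realType.

Lemma geo_bound (r : R) N : 0 <= r -> \sum_(j < N) r ^+ j * (1 - r) = 1 - r ^+ N.
Proof.
move=> r0; elim: N => [|N IH]; first by rewrite big_ord0 expr0 subrr.
by rewrite big_ord_recr /= IH exprS; ring.
Qed.

Lemma term_bound m K k : (0 < K)%N -> (K <= m)%N ->
  ((m.-1 ^_ k)%:R / m%:R ^+ k.+1 <= m%:R^-1 * ((m - K)%:R / m%:R) ^+ (k - K) :> R).
Proof.
move=> K0 Km.
have m0 : (0 < m%:R :> R) by rewrite ltr0n; apply: leq_trans Km.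
have hk : (k = minn k K + (k - K))%N by lia.
rewrite ler_pdivrMr ?exprn_gt0 //.
apply: le_trans (_ : ((m ^ minn k K * (m - K) ^ (k - K))%N%:R <= _)).
  by rewrite ler_nat ffact_bound.
rewrite natrM !natrX expr_div_n.
have -> : m%:R ^+ k.+1 = m%:R ^+ (minn k K) * m%:R ^+ (k - K) * m%:R :> R by rewrite -exprD -hk exprSr.
rewrite le_eqVlt; apply/orP; left; apply/eqP.
field; rewrite ?expf_neq0 // gt_eqF //.
Qed.

Lemma sum_bound m K : (0 < K)%N -> (K <= m)%N ->
  \sum_(k < m) ((m.-1 ^_ k)%:R / m%:R ^+ k.+1 :> R) <= K%:R / m%:R + K%:R^-1.
Proof.
move=> K0 Km.
have m0 : (0 < m%:R :> R) by rewrite ltr0n; apply: leq_trans Km.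
set r : R := (m - K)%:R / m%:R.
have r0 : 0 <= r by rewrite divr_ge0.
apply: le_trans (_ : \sum_(k < m) m%:R^-1 * r ^+ (k - K) <= _).
  by apply: ler_sum => k _; apply: term_bound.
rewrite -(big_mkord xpredT (fun k => m%:R^-1 * r ^+ (k - K))).
rewrite (@big_cat_nat _ _ _ K) /=; [|by []|exact: Km].
rewrite (eq_big_nat _ _ (F2 := fun _ => m%:R^-1)); last first.
  move=> i /andP[_ iK]; have -> : (i - K = 0)%N by apply/eqP; rewrite subn_eq0 ltnW.
  by rewrite expr0 mulr1.
rewrite sumr_const_nat subn0; apply: lerD; first by rewrite -[X in X <= _]mulr_natr mulrC.
rewrite (_ : K = 0 + K)%N // big_addn big_mkord !add0n.
rewrite (eq_bigr (fun j : 'I_(m - K) => m%:R^-1 * r ^+ j)); last by move=> j _; rewrite addnK.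
rewrite -mulr_sumr.
have h1r : 1 - r = K%:R / m%:R.
  rewrite /r natrB //; field; rewrite gt_eqF //.
have Kp : (0 < K%:R :> R) by rewrite ltr0n.
have hs : \sum_(j < m - K) r ^+ j <= m%:R / K%:R.
  have hpos : 0 < 1 - r by rewrite h1r divr_gt0.
  rewrite -(ler_pM2r hpos) mulr_suml geo_bound //.
  rewrite (_ : m%:R / K%:R * (1 - r) = 1); last by rewrite h1r; field; rewrite !gt_eqF.
  by rewrite lerBlDr lerDl exprn_ge0.
apply: le_trans (_ : m%:R^-1 * (m%:R / K%:R) <= _).
  by apply: ler_wpM2l => //; rewrite invr_ge0 ltW.
rewrite le_eqVlt; apply/orP; left; apply/eqP; field; rewrite !gt_eqF //.
Qed.
End Anal.
From mathcomp Require Import lra.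
Import numFieldNormedType.Exports.
Section Lim.
Variable R : realType.
Definition bn (m : nat) : R := \sum_(k < m) ((m.-1 ^_ k)%:R * 2 / m%:R ^+ k.+1).

Lemma bn_ge0 m : 0 <= bn m.
Proof.
by apply: sumr_ge0 => k _; rewrite divr_ge0 ?mulr_ge0 ?exprn_ge0.
Qed.

Lemma bn_bound m K : (0 < K)%N -> (K <= m)%N -> bn m <= 2 * (K%:R / m%:R + K%:R^-1).
Proof.
move=> K0 Km; apply: le_trans (_ : 2 * \sum_(k < m) ((m.-1 ^_ k)%:R / m%:R ^+ k.+1) <= _).
  rewrite /bn mulr_sumr le_eqVlt; apply/orP; left; apply/eqP; apply: eq_bigr => k _.
  by rewrite mulrAC mulrC.
by rewrite ler_pM2l //; apply: sum_bound.
Qed.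

Lemma bn_cvg : (fun n : nat => bn n.+1) @ \oo --> (0 : R).
Proof.
apply/cvgrPdist_le => eps e0.
set K := (Num.truncn (4 / eps)).+1.
have hK : 4 / eps < K%:R by apply: truncnS_gt.
have K0 : (0 < K)%N by [].
have Kp : (0 < K%:R :> R) by rewrite ltr0n.
set N := maxn K (Num.truncn (4 * K%:R / eps)).+1.
apply: filterS (nbhs_infty_ge N) => n hn.
have mK : (K <= n.+1)%N by apply: leq_trans (leq_maxl _ _) (leq_trans hn _).
have hm : 4 * K%:R / eps < n.+1%:R.
  apply: lt_le_trans (truncnS_gt _) _; rewrite ler_nat.
  by apply: leq_trans (leq_maxr _ _) (leq_trans hn _).
have mp : (0 < n.+1%:R :> R) by rewrite ltr0n.
rewrite sub0r normrN ger0_norm ?bn_ge0 //.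
apply: le_trans (bn_bound K0 mK) _.
have h1 : K%:R / n.+1%:R <= eps / 4.
  rewrite ler_pdivrMr // ; rewrite ltr_pdivrMr // in hm; lra.
have h2 : K%:R^-1 <= eps / 4.
  rewrite ltr_pdivrMr // in hK; rewrite -[K%:R^-1]mul1r ler_pdivrMr //; lra.
apply: le_trans (_ : 2 * (eps / 4 + eps / 4) <= _).
  by rewrite ler_pM2l //; apply: lerD.
by rewrite le_eqVlt; apply/orP; left; apply/eqP; field.
Qed.
End Lim.
Unset Implicit Arguments.
Theorem mainTheorem5 (R : realType) (q : nat -> R)
    (hq : prio_distribution q) (v : forall n : nat, 'I_n.+1) :
  (fun n : nat => prob_self_winning q 2 (v n)) @ \oo --> (0 : \bar R)%E.
Proof.
have q0 := hq.1.
apply: (@squeeze_cvge nat \oo _ R (fun _ => 0%E) _ (fun n => (bn R n.+1)%:E)).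
- apply: filterS (nbhs_infty_ge 1) => n hn; apply/andP; split.
    apply: esum_ge0 => x _; rewrite lee_fin divr_ge0 ?mulr_ge0 ?prodr_ge0 ?exprn_ge0 //.
  apply: le_trans (E1 hq (v n)) _; rewrite lee_fin; exact: E2.
- exact: cvg_cst.
- apply: cvg_EFin; first by apply: nearW.
  exact: bn_cvg.
Qed.
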